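(* Let $R:\mathbb{R}^4\to\mathbb{R}^4$ be any rotation, let $\mathcal{C}=\{(x,y,z,w)\in\mathbb{R}^4: x^2+y^2=\tfrac12=z^2+w^2\}$ be the Clifford torus, and let $Q=\pi\big(R(\mathcal{C})\setminus\{(0,0,0,1)\}\big)\subset\mathbb{R}^3$. Then there is a line $l\subset\mathbb{R}^3$ such that $Q$ has generalized reflectional symmetry along $l$.
   Context: A rotation of $\mathbb{R}^n$ is a linear map $\mathbb{R}^n\to\mathbb{R}^n$ whose matrix is orthogonal with determinant $1$. The unit three-sphere is $\mathbb{S}^3=\{\mathbf{x}\in\mathbb{R}^4:|\mathbf{x}|=1\}$, which every rotation maps onto itself. Stereographic projection $\pi:\mathbb{S}^3\setminus\{(0,0,0,1)\}\to\mathbb{R}^3$ is $\pi(x,y,z,w)=\frac{1}{1-w}(x,y,z)$. For $\mathbf{a}\in\mathbb{R}^3$ and $\rho>0$, reflection (inversion) about the sphere of center $\mathbf{a}$ and radius $\rho$ is the map $\psi_{\mathbf{a},\rho}:\mathbb{R}^3\setminus\{\mathbf{a}\}\to\mathbb{R}^3\setminus\{\mathbf{a}\}$, $\psi_{\mathbf{a},\rho}(\mathbf{p})=\rho^2\frac{\mathbf{p}-\mathbf{a}}{|\mathbf{p}-\mathbf{a}|^2}+\mathbf{a}$. A set $Q\subset\mathbb{R}^3$ has generalized reflectional symmetry along a line $l\subset\mathbb{R}^3$ if there exist a point $\mathbf{m}_0\in l$ and a number $\rho_0>0$ such that for every $\mathbf{a}\in l$, setting $\rho=\sqrt{|\mathbf{a}-\mathbf{m}_0|^2+\rho_0^2}$,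 one has $\psi_{\mathbf{a},\rho}(Q\setminus\{\mathbf{a}\})=Q\setminus\{\mathbf{a}\}$ (when $\mathbf{a}\notin Q$ this says $\psi_{\mathbf{a},\rho}(Q)=Q$). *)

(* Defs.v *)
From HB Require Import structures.
From mathcomp Require Import all_boot all_order all_algebra.
From mathcomp Require Import classical_sets reals.
Set Implicit Arguments. Unset Strict Implicit. Unset Printing Implicit Defensive.
Import Order.TTheory GRing.Theory Num.Theory.
Local Open Scope ring_scope.
Local Open Scope classical_set_scope.

Section Defs.
Variable R : realType.

Definition sqnorm n (x : 'cV[R]_n) : R := \sum_(i < n) x i 0 ^+ 2.
Definition vnorm n (x : 'cV[R]_n) : R := Num.sqrt (sqnorm x).

Definition rotation n (M : 'M[R]_n) : Prop := M^T *m M = 1%:M /\ \det M = 1.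

(* coordinates x,y,z,w of R^4 are indices 0,1,2,3 *)
Definition clifford_torus : set 'cV[R]_4 :=
  [set p | p 0 0 ^+ 2 + p 1 0 ^+ 2 = 2^-1 /\ p 2%:R 0 ^+ 2 + p 3%:R 0 ^+ 2 = 2^-1].

Definition north_pole : 'cV[R]_4 := \col_(i < 4) (if i == 3%:R then 1 else 0).

(* stereographic projection pi(x,y,z,w) = (x,y,z)/(1-w); only used off the north pole *)
Definition stereo (p : 'cV[R]_4) : 'cV[R]_3 :=
  (1 - p 3%:R 0)^-1 *: \col_(i < 3) p (widen_ord (isT : 3 <= 4)%N i) 0.

Definition sphere_inv (a : 'cV[R]_3) (rho : R) (p : 'cV[R]_3) : 'cV[R]_3 :=
  (rho ^+ 2 / sqnorm (p - a)) *: (p - a) + a.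

Definition is_line (l : set 'cV[R]_3) : Prop :=
  exists (p0 v : 'cV[R]_3), v != 0 /\ l = [set p0 + t *: v | t in [set: R]].

Definition gen_refl_sym (Q l : set 'cV[R]_3) : Prop :=
  exists (m0 : 'cV[R]_3) (rho0 : R), l m0 /\ 0 < rho0 /\
    forall a, l a ->
      let rho := Num.sqrt (vnorm (a - m0) ^+ 2 + rho0 ^+ 2) in
      sphere_inv a rho @` (Q `\ a) = Q `\ a.

End Defs.

(* Main.v *)
Require Import Defs.
From HB Require Import structures.
From mathcomp Require Import all_boot all_order all_algebra.
From mathcomp Require Import classical_sets reals.
From mathcomp Require Import ring lra.
Import Order.TTheory GRing.Theory Num.Theory.
Local Open Scope ring_scope.
Local Open Scope classical_set_scope.

Section Aux.
Variable R : realType.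

Lemma i4_3 : (3%:R : 'I_4) = inord 3.
Proof. by apply/val_inj; rewrite /= inordK. Qed.
Lemma i4_2 : (2%:R : 'I_4) = inord 2.
Proof. by apply/val_inj; rewrite /= inordK. Qed.
Lemma i4_0 : (0 : 'I_4) = inord 0.
Proof. by apply/val_inj; rewrite /= inordK. Qed.
Lemma i4_1 : (1 : 'I_4) = inord 1.
Proof. by apply/val_inj; rewrite /= inordK. Qed.

Lemma inord_eq4 (a b : nat) : (a < 4)%N -> (b < 4)%N ->
  (inord a == inord b :> 'I_4) = (a == b).
Proof. by move=> ha hb; rewrite -(inj_eq val_inj) /= !inordK. Qed.

Lemma sum4 (V : nmodType) (F : 'I_4 -> V) :
  \sum_(i < 4) F i = F (inord 0) + F (inord 1) + F (inord 2) + F (inord 3).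
Proof.
rewrite !big_ord_recr big_ord0 /= add0r.
by congr (_ + _ + _ + _); congr F; apply/val_inj; rewrite /= inordK.
Qed.

Lemma sum3 (V : nmodType) (F : 'I_3 -> V) :
  \sum_(i < 3) F i = F (inord 0) + F (inord 1) + F (inord 2).
Proof.
rewrite !big_ord_recr big_ord0 /= add0r.
by congr (_ + _ + _); congr F; apply/val_inj; rewrite /= inordK.
Qed.

Lemma widen_inord (k : nat) (H : (3 <= 4)%N) : (k < 3)%N ->
  widen_ord H (inord k : 'I_3) = inord k :> 'I_4.
Proof. by move=> hk; apply/val_inj; rewrite /= !inordK //; apply: (ltn_trans hk). Qed.

Definition dot (p q : 'cV[R]_4) : R := \sum_(i < 4) p i 0 * q i 0.
Definition refl (u p : 'cV[R]_4) : 'cV[R]_4 := p - (2 * dot p u / dot u u) *: u.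
Definition top (p : 'cV[R]_4) : 'cV[R]_3 :=
  \col_(i < 3) p (widen_ord (isT : 3 <= 4)%N i) 0.

Lemma stereoE p : stereo p = (1 - p (inord 3) 0)^-1 *: top p.
Proof. by rewrite /stereo i4_3. Qed.

Lemma sqnorm_dot p : sqnorm p = dot p p.
Proof. by apply: eq_bigr => i _; rewrite expr2. Qed.

Lemma dotC p q : dot p q = dot q p.
Proof. by apply: eq_bigr => i _; rewrite mulrC. Qed.

Lemma dotBZl p q w c : dot (p - c *: q) w = dot p w - c * dot q w.
Proof.
rewrite /dot mulr_sumr -sumrB; apply: eq_bigr => i _; rewrite !mxE; ring.
Qed.

Lemma dot_mx p q : dot p q = (p^T *m q) 0 0.
Proof. by rewrite mxE; apply: eq_bigr => i _; rewrite mxE. Qed.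

Lemma dot_rot (M : 'M[R]_4) p q : M^T *m M = 1%:M ->
  dot (M *m p) (M *m q) = dot p q.
Proof.
move=> h; rewrite !dot_mx trmx_mul -mulmxA (mulmxA M^T) h mul1mx //.
Qed.

Lemma rot_refl (M : 'M[R]_4) u p : M^T *m M = 1%:M ->
  M *m refl u p = refl (M *m u) (M *m p).
Proof.
by move=> h; rewrite /refl !dot_rot // mulmxBr scalemxAr.
Qed.

Lemma refl_dot u p : dot u u != 0 -> dot (refl u p) u = - dot p u.
Proof. by move=> h; rewrite /refl dotBZl; field. Qed.

Lemma reflK u p : dot u u != 0 -> refl u (refl u p) = p.
Proof.
move=> h; rewrite {1}/refl refl_dot //.
by rewrite /refl; apply/matrixP => i j; rewrite !mxE; field.
Qed.

Lemma refl_norm u p : dot u u != 0 -> dot (refl u p) (refl u p) = dot p p.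
Proof.
by move=> h; rewrite {1}/refl dotBZl [dot u (refl _ _)]dotC refl_dot // [dot p (refl _ _)]dotC /refl dotBZl [dot u p]dotC; field.
Qed.


Lemma dot4 p q : dot p q = p (inord 0) 0 * q (inord 0) 0 + p (inord 1) 0 * q (inord 1) 0
  + p (inord 2) 0 * q (inord 2) 0 + p (inord 3) 0 * q (inord 3) 0.
Proof. by rewrite /dot sum4. Qed.

Lemma key_sq (q u : 'cV[R]_4) (a : 'cV[R]_3) :
  dot q q = 1 -> u (inord 3) 0 != 0 -> dot u u != 0 -> 1 - q (inord 3) 0 != 0 ->
  a = - (u (inord 3) 0)^-1 *: top u ->
  sqnorm (stereo q - a) = dot u u * (1 - refl u q (inord 3) 0) / ((1 - q (inord 3) 0) * u (inord 3) 0 ^+ 2).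
Proof.
move=> hq hu3 hU hq3 ->.
rewrite /sqnorm sum3 stereoE !mxE !widen_inord //.
rewrite [dot q u]dot4.
move: hq hU; rewrite !dot4.
set q0 := q (inord 0) 0; set q1 := q (inord 1) 0; set q2 := q (inord 2) 0; set q3 := q (inord 3) 0.
set u0 := u (inord 0) 0; set u1 := u (inord 1) 0; set u2 := u (inord 2) 0; set u3 := u (inord 3) 0.
move=> hq hU.
apply/eqP; rewrite -subr_eq0; apply/eqP.
transitivity ((q0 * q0 + q1 * q1 + q2 * q2 + q3 * q3 - 1) / (1 - q3) ^+ 2).
  by field; rewrite hu3 hq3.
by rewrite hq subrr mul0r.
Qed.

Lemma key_inv (q u : 'cV[R]_4) (a : 'cV[R]_3) rho :
  dot q q = 1 -> u (inord 3) 0 != 0 -> dot u u != 0 -> 1 - q (inord 3) 0 != 0 ->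
  1 - refl u q (inord 3) 0 != 0 ->
  rho ^+ 2 = dot u u / u (inord 3) 0 ^+ 2 ->
  a = - (u (inord 3) 0)^-1 *: top u ->
  sphere_inv a rho (stereo q) = stereo (refl u q).
Proof.
move=> hq hu3 hU hq3 hs3 hrho ha.
rewrite /sphere_inv (@key_sq q u a hq hu3 hU hq3 ha) hrho.
move: hs3; rewrite ha /refl !stereoE => hs3.
apply/matrixP => i j; rewrite !mxE.
move: hs3; rewrite !mxE => hs3.
have E : dot u u - (q (inord 3) 0 * dot u u - 2 * dot q u * u (inord 3) 0) =
  dot u u * (1 - (q (inord 3) 0 - 2 * dot q u / dot u u * u (inord 3) 0)) by field.
by field; rewrite hU hu3 hq3 E mulf_neq0.
Qed.

Lemma unit_N (q : 'cV[R]_4) : dot q q = 1 -> q (inord 3) 0 = 1 -> q = north_pole R.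
Proof.
rewrite dot4 => hq h3.
have h0 : q (inord 0) 0 = 0 by nra.
have h1 : q (inord 1) 0 = 0 by nra.
have h2 : q (inord 2) 0 = 0 by nra.
apply/matrixP => i j; rewrite ord1 !mxE.
case: i => [[|[|[|[|k]]]] hi] //.
- have -> : Ordinal hi = inord 0 by apply/val_inj; rewrite /= inordK.
  by rewrite h0 -(inj_eq val_inj) /= inordK.
- have -> : Ordinal hi = inord 1 by apply/val_inj; rewrite /= inordK.
  by rewrite h1 -(inj_eq val_inj) /= inordK.
- have -> : Ordinal hi = inord 2 by apply/val_inj; rewrite /= inordK.
  by rewrite h2 -(inj_eq val_inj) /= inordK.
- have -> : Ordinal hi = inord 3 by apply/val_inj; rewrite /= inordK.
  by rewrite h3 -(inj_eq val_inj) /= inordK.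
Qed.

Lemma sqnorm0 (x : 'cV[R]_3) : sqnorm x = 0 -> x = 0.
Proof.
move=> h; apply/matrixP => i j; rewrite ord1 mxE.
have := @psumr_eq0P _ _ _ (fun i => x i 0 ^+ 2) (fun i _ => sqr_ge0 (x i 0)) h i isT.
by move/eqP; rewrite sqrf_eq0 => /eqP.
Qed.

Lemma N3 : north_pole R (inord 3) 0 = 1.
Proof. by rewrite mxE i4_3 eqxx. Qed.

Lemma sqnorm_zero : sqnorm (0 : 'cV[R]_3) = 0.
Proof. by rewrite /sqnorm big1 // => i _; rewrite mxE expr0n. Qed.

Lemma swap (q u : 'cV[R]_4) (a : 'cV[R]_3) rho :
  dot q q = 1 -> q != north_pole R -> u (inord 3) 0 != 0 -> dot u u != 0 ->
  rho ^+ 2 = dot u u / u (inord 3) 0 ^+ 2 ->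
  a = - (u (inord 3) 0)^-1 *: top u ->
  stereo q != a ->
  [/\ refl u q != north_pole R,
      sphere_inv a rho (stereo q) = stereo (refl u q) &
      stereo (refl u q) != a].
Proof.
move=> hq hN hu3 hU hrho ha hqa.
have hq3 : 1 - q (inord 3) 0 != 0.
  apply: contra hN; rewrite subr_eq0 => /eqP h.
  by apply/eqP; apply: unit_N.
have hs3 : 1 - refl u q (inord 3) 0 != 0.
  apply: contra hqa => /eqP h0.
  have := @key_sq q u a hq hu3 hU hq3 ha; rewrite h0 mulr0 mul0r => /sqnorm0.
  by move/eqP; rewrite subr_eq0.
split.
- apply: contra hs3 => /eqP ->; by rewrite N3 subrr.
- exact: key_inv.
- have hs : dot (refl u q) (refl u q) = 1 by rewrite refl_norm.
  have := @key_sq (refl u q) u a hs hu3 hU hs3 ha.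
  rewrite reflK // => E; apply/eqP => h; move: E; rewrite h subrr sqnorm_zero.
  move/esym/eqP; rewrite !mulf_eq0 !invr_eq0 ?mulf_eq0 ?expf_eq0 /=.
  by rewrite (negbTE hU) (negbTE hq3) (negbTE hs3) (negbTE hu3).
Qed.

Definition ev (i1 i2 : 'I_4) (al be : R) : 'cV[R]_4 :=
  al *: delta_mx i1 0 + be *: delta_mx i2 0.

Lemma ev_rot (M : 'M[R]_4) i1 i2 al be r :
  (M *m ev i1 i2 al be) r 0 = al * M r i1 + be * M r i2.
Proof. by rewrite /ev mulmxDr -!scalemxAr -!colE !mxE. Qed.

Lemma dot_ge0 (x : 'cV[R]_3) : 0 <= sqnorm x.
Proof. by apply: sumr_ge0 => i _; apply: sqr_ge0. Qed.

Lemma sqnormZ (x : 'cV[R]_3) t : sqnorm (t *: x) = t ^+ 2 * sqnorm x.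
Proof. by rewrite /sqnorm mulr_sumr; apply: eq_bigr => i _; rewrite mxE exprMn. Qed.

Lemma cliff_unit (c : 'cV[R]_4) : @clifford_torus R c -> dot c c = 1.
Proof.
rewrite /clifford_torus /= => -[h1 h2]; rewrite i4_0 i4_1 in h1; rewrite i4_2 i4_3 in h2.
rewrite dot4 -!expr2; lra.
Qed.

Lemma gen (Rot : 'M[R]_4) (i1 i2 : 'I_4) :
  Rot^T *m Rot = 1%:M -> i1 != i2 ->
  Rot (inord 3) i1 ^+ 2 + Rot (inord 3) i2 ^+ 2 != 0 ->
  (forall al be c, al ^+ 2 + be ^+ 2 != 0 -> @clifford_torus R c ->
        @clifford_torus R (refl (ev i1 i2 al be) c)) ->
  let Q := @stereo R @` (((fun p => Rot *m p) @` @clifford_torus R) `\ @north_pole R) in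
  exists l : set 'cV[R]_3, @is_line R l /\ @gen_refl_sym R Q l.
Proof.
move=> hR h12 hk0 hC Q.
have hS : forall j1 j2, \sum_(r < 4) Rot r j1 * Rot r j2 = (j1 == j2)%:R.
  move=> j1 j2; have := congr1 (fun M : 'M[R]_4 => M j1 j2) hR; rewrite !mxE => <-.
  by apply: eq_bigr => r _; rewrite !mxE.
have Sxx := hS i1 i1; have Syy := hS i2 i2; have Sxy := hS i1 i2.
rewrite eqxx in Sxx; rewrite eqxx in Syy; rewrite (negbTE h12) in Sxy.
rewrite !sum4 in Sxx Syy Sxy.
set ga := Rot (inord 3) i1; set de := Rot (inord 3) i2.
set k := ga ^+ 2 + de ^+ 2.
have kpos : 0 < k by rewrite lt_def hk0 addr_ge0 ?sqr_ge0.
pose m0 : 'cV[R]_3 := \col_(i < 3) (- k^-1 * (ga * Rot (widen_ord (isT : 3 <= 4)%N i) i1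
     + de * Rot (widen_ord (isT : 3 <= 4)%N i) i2)).
pose d : 'cV[R]_3 := \col_(i < 3) (- de * Rot (widen_ord (isT : 3 <= 4)%N i) i1
     + ga * Rot (widen_ord (isT : 3 <= 4)%N i) i2).
have hd : sqnorm d = k.
  rewrite /sqnorm sum3 !mxE !widen_inord //.
  apply/eqP; rewrite -subr_eq0; apply/eqP.
  transitivity (de ^+ 2 * (Rot (inord 0) i1 * Rot (inord 0) i1 + Rot (inord 1) i1 * Rot (inord 1) i1 +
      Rot (inord 2) i1 * Rot (inord 2) i1 + Rot (inord 3) i1 * Rot (inord 3) i1 - 1)
    - 2 * ga * de * (Rot (inord 0) i1 * Rot (inord 0) i2 + Rot (inord 1) i1 * Rot (inord 1) i2 +
      Rot (inord 2) i1 * Rot (inord 2) i2 + Rot (inord 3) i1 * Rot (inord 3) i2)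
    + ga ^+ 2 * (Rot (inord 0) i2 * Rot (inord 0) i2 + Rot (inord 1) i2 * Rot (inord 1) i2 +
      Rot (inord 2) i2 * Rot (inord 2) i2 + Rot (inord 3) i2 * Rot (inord 3) i2 - 1)).
    rewrite /k /ga /de; ring.
  by rewrite Sxx Syy Sxy /=; ring.
exists [set m0 + t *: d | t in [set: R]]; split.
  exists m0, d; split => //.
  apply/eqP => d0; move: hd; rewrite d0 sqnorm_zero => k0.
  by move: kpos; rewrite -k0 ltxx.
exists m0, (Num.sqrt k)^-1; split; first by exists 0 => //; rewrite scale0r addr0.
split; first by rewrite invr_gt0 sqrtr_gt0.
move=> _ [t _ <-] rho.
set a := m0 + t *: d.
pose al := ga + t * k * de; pose be := de - t * k * ga.
pose u := Rot *m ev i1 i2 al be.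
have hu : forall r, u r 0 = al * Rot r i1 + be * Rot r i2 by move=> r; apply: ev_rot.
have uE : u = Rot *m ev i1 i2 al be by [].
clearbody u.
have hu3 : u (inord 3) 0 = k by rewrite hu /al /be /k /ga /de; ring.
have hU : dot u u = al ^+ 2 + be ^+ 2.
  rewrite dot4 !hu.
  apply/eqP; rewrite -subr_eq0; apply/eqP.
  transitivity (al ^+ 2 * (Rot (inord 0) i1 * Rot (inord 0) i1 + Rot (inord 1) i1 * Rot (inord 1) i1 +
      Rot (inord 2) i1 * Rot (inord 2) i1 + Rot (inord 3) i1 * Rot (inord 3) i1 - 1)
    + 2 * al * be * (Rot (inord 0) i1 * Rot (inord 0) i2 + Rot (inord 1) i1 * Rot (inord 1) i2 +
      Rot (inord 2) i1 * Rot (inord 2) i2 + Rot (inord 3) i1 * Rot (inord 3) i2)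
    + be ^+ 2 * (Rot (inord 0) i2 * Rot (inord 0) i2 + Rot (inord 1) i2 * Rot (inord 1) i2 +
      Rot (inord 2) i2 * Rot (inord 2) i2 + Rot (inord 3) i2 * Rot (inord 3) i2 - 1)).
    ring.
  by rewrite Sxx Syy Sxy /=; ring.
have habE : al ^+ 2 + be ^+ 2 = k * (1 + (t * k) ^+ 2) by rewrite /al /be /k; ring.
have hab : al ^+ 2 + be ^+ 2 != 0.
  rewrite habE mulf_neq0 // ?gt_eqF //; apply: ltr_pwDl => //; apply: sqr_ge0.
have hk : k != 0 by rewrite gt_eqF.
have hrho : rho ^+ 2 = dot u u / u (inord 3) 0 ^+ 2.
  rewrite /rho sqr_sqrtr ?(addr_ge0 (sqr_ge0 _) (sqr_ge0 _)) //.
  rewrite /vnorm sqr_sqrtr ?dot_ge0 //.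
  have -> : a - m0 = t *: d by rewrite /a addrC addKr.
  rewrite sqnormZ hd hU hu3 exprVn sqr_sqrtr ?(ltW kpos) //.
  by rewrite habE; field.
have ha : a = - (u (inord 3) 0)^-1 *: top u.
  by apply/matrixP => i j; rewrite !mxE hu3 !hu /al /be; field.
have hu3' : u (inord 3) 0 != 0 by rewrite hu3.
have hUn : dot u u != 0 by rewrite hU.
rewrite eqEsubset; split.
- move=> y [p [[q [[c hc <-] hqN] <-] hpa] <-].
  have hq1 : dot (Rot *m c) (Rot *m c) = 1 by rewrite dot_rot // cliff_unit.
  have hqN' : Rot *m c != north_pole R by apply/eqP.
  have hpa' : stereo (Rot *m c) != a by apply/eqP.
  have [h1 h2 h3] := @swap (Rot *m c) u a rho hq1 hqN' hu3' hUn hrho ha hpa'.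
  rewrite h2; split; last by apply/eqP.
  exists (refl u (Rot *m c)) => //; split; last by apply/eqP.
  exists (refl (ev i1 i2 al be) c); first by apply: hC.
  by rewrite rot_refl // -uE.
- move=> p [[_ [[c hc <-] hqN] <-] hpa].
  have hq1 : dot (Rot *m c) (Rot *m c) = 1 by rewrite dot_rot // cliff_unit.
  have hqN' : Rot *m c != north_pole R by apply/eqP.
  have hpa' : stereo (Rot *m c) != a by apply/eqP.
  have [h1 h2 h3] := @swap (Rot *m c) u a rho hq1 hqN' hu3' hUn hrho ha hpa'.
  have hs1 : dot (refl u (Rot *m c)) (refl u (Rot *m c)) = 1 by rewrite refl_norm.
  have [_ h2' _] := @swap (refl u (Rot *m c)) u a rho hs1 h1 hu3' hUn hrho ha h3.
  exists (stereo (refl u (Rot *m c))); last by rewrite h2' reflK.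
  split; last by apply/eqP.
  exists (refl u (Rot *m c)) => //; split; last by apply/eqP.
  exists (refl (ev i1 i2 al be) c); first by apply: hC.
  by rewrite rot_refl // -uE.
Qed.


Lemma ev_entry i1 i2 al be r : ev i1 i2 al be r 0 = al * (r == i1)%:R + be * (r == i2)%:R.
Proof. by rewrite /ev !mxE !eqxx !andbT. Qed.

Lemma cliffE (c : 'cV[R]_4) : @clifford_torus R c <->
  (c (inord 0) 0 ^+ 2 + c (inord 1) 0 ^+ 2 = 2^-1 /\ c (inord 2) 0 ^+ 2 + c (inord 3) 0 ^+ 2 = 2^-1).
Proof.
split => -[h1 h2].
  by rewrite i4_0 i4_1 in h1; rewrite i4_2 i4_3 in h2.
by split; [rewrite i4_0 i4_1 | rewrite i4_2 i4_3].
Qed.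

Lemma cliff01 al be c : al ^+ 2 + be ^+ 2 != 0 -> @clifford_torus R c ->
  @clifford_torus R (refl (ev (inord 0) (inord 1) al be) c).
Proof.
move=> hab /cliffE [h1 h2]; apply/cliffE.
rewrite /refl !mxE !dot4 !ev_entry !inord_eq4 //=.
by split; [rewrite -h1 | rewrite -h2]; field; move: hab; rewrite !expr2.
Qed.

Lemma cliff23 al be c : al ^+ 2 + be ^+ 2 != 0 -> @clifford_torus R c ->
  @clifford_torus R (refl (ev (inord 2) (inord 3) al be) c).
Proof.
move=> hab /cliffE [h1 h2]; apply/cliffE.
rewrite /refl !mxE !dot4 !ev_entry !inord_eq4 //=.
by split; [rewrite -h1 | rewrite -h2]; field; move: hab; rewrite !expr2.
Qed.
End Aux.

Theorem theorem2 (R : realType) (Rot : 'M[R]_4) :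
  @rotation R 4 Rot ->
  let Q := @stereo R @` (((fun p => Rot *m p) @` @clifford_torus R) `\ @north_pole R) in
  exists l : set 'cV[R]_3, @is_line R l /\ @gen_refl_sym R Q l.
Proof.
move=> [hR _].
have hRR : Rot *m Rot^T = 1%:M by apply: mulmx1C.
have hs : \sum_(j < 4) Rot (inord 3) j * Rot (inord 3) j = 1.
  have := congr1 (fun M : 'M[R]_4 => M (inord 3) (inord 3)) hRR.
  rewrite !mxE eqxx /= => E; rewrite -[RHS]E; by apply: eq_bigr => j _; rewrite mxE.
rewrite sum4 -!expr2 in hs.
have [h|h] := eqVneq (Rot (inord 3) (inord 0) ^+ 2 + Rot (inord 3) (inord 1) ^+ 2) 0.
- have h23 : (inord 2 : 'I_4) != inord 3 by rewrite inord_eq4.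
  have hk : Rot (inord 3) (inord 2) ^+ 2 + Rot (inord 3) (inord 3) ^+ 2 != 0.
    have -> : Rot (inord 3) (inord 2) ^+ 2 + Rot (inord 3) (inord 3) ^+ 2 = 1.
      by rewrite -hs h add0r.
    exact: oner_neq0.
  exact: (@gen R Rot (inord 2) (inord 3) hR h23 hk (@cliff23 R)).
- have h01 : (inord 0 : 'I_4) != inord 1 by rewrite inord_eq4.
  exact: (@gen R Rot (inord 0) (inord 1) hR h01 h (@cliff01 R)).
Qed.
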